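(* Let $(\mathcal C,S,T)$ be a semi-thin association schemoid. For any $\alpha,\beta,\gamma\in S_0$, $\sigma\in{}_\alpha S_\beta$ and $\tau\in{}_\beta S_\gamma$, there exists a unique $\mu\in{}_\alpha S_\gamma$ such that $p^\mu_{\tau\sigma}=1$; moreover $p^{\mu'}_{\tau\sigma}=0$ for every $\mu'\in S$ with $\mu'\neq\mu$.
   Context: Write $s(f),t(f)$ for source and target. A quasi-schemoid is a pair $(\mathcal C,S)$ with $\mathcal C$ a small category and $S$ a partition of $mor(\mathcal C)$ into nonempty blocks such that for all $\sigma,\tau,\mu\in S$ and $f,g\in\mu$ the sets $\{(a,b)\in\sigma\times\tau: s(a)=t(b), a\circ b=f\}$ and the analogous set for $g$ have equal cardinality, denoted $p^\mu_{\sigma\tau}$. An association schemoid is a triple $(\mathcal C,S,T)$ where $(\mathcal C,S)$ is a quasi-schemoid, every block containing an endomorphism consists only of endomorphisms, and $T:\mathcal C\to\mathcal C$ is a contravariant functor with $T^2=\mathrm{id}$ and $\{T(f):f\in\sigma\}\in S$ for all $\sigma\in S$. With $J_0=\{1_x\}$, it is unital if every block meeting $J_0$ lies in $J_0$. A unital association schemoid is semi-thin if (i) $\#\{f\in\sigma: s(f)=x\}\le 1$ for all $\sigma\in S$, $x\in ob(\mathcal C)$, and (ii) $\mathcal C$ is a groupoid and $T(f)=f^{-1}$ for all morphisms $f$. $S_0=\{\alpha\in S:\alpha\cap J_0\neq\emptyset\}$, and for $\alpha,\beta\in S_0$, ${}_\alpha S_\beta=\{\sigma\in S: p^\sigma_{\sigma\alpha}=p^\sigma_{\beta\sigma}=1\}$.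 *)

(* Defs.v *)
Set Implicit Arguments.

(** A small category, presented by its type of objects, type of morphisms,
    source/target maps, identities and a composition [comp a b = a o b],
    which is only meaningful when [src a = tgt b]. *)
Unset Implicit Arguments.
Record category := Category {
  Obj : Type;
  Mor : Type;
  src : Mor -> Obj;
  tgt : Mor -> Obj;
  idm : Obj -> Mor;
  comp : Mor -> Mor -> Mor;
  src_id : forall x, src (idm x) = x;
  tgt_id : forall x, tgt (idm x) = x;
  src_comp : forall a b, src a = tgt b -> src (comp a b) = src b;
  tgt_comp : forall a b, src a = tgt b -> tgt (comp a b) = tgt a;
  comp_id_r : forall f, comp f (idm (src f)) = f;
  comp_id_l : forall f, comp (idm (tgt f)) f = f;
  comp_assoc : forall a b c, src a = tgt b -> src b = tgt c ->
      comp a (comp b c) = comp (comp a b) c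
}.

Arguments src {c0} _.
Arguments tgt {c0} _.
Arguments idm {c0} _.
Arguments comp {c0} _ _.
Set Implicit Arguments.

Definition equinum (X Y : Type) (A : X -> Prop) (B : Y -> Prop) : Prop :=
  exists (h : {x | A x} -> {y | B y}) (k : {y | B y} -> {x | A x}),
    (forall u, k (h u) = u) /\ (forall v, h (k v) = v).

Definition has_card (X : Type) (A : X -> Prop) (n : nat) : Prop :=
  equinum A (fun i : nat => i < n).

(** A partition S of mor(C) into nonempty blocks is encoded by a type [Blk]
    of blocks and the surjective map [cls] sending a morphism to its block;
    "f \in sigma" means [cls f = sigma]. *)
Section Pairs.
Variables (C : category) (Blk : Type) (cls : Mor C -> Blk).

Definition pairs (sigma tau : Blk) (f : Mor C) : Mor C * Mor C -> Prop :=
  fun p => cls (fst p) = sigma /\ cls (snd p) = tau /\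
           src (fst p) = tgt (snd p) /\ comp (fst p) (snd p) = f.
End Pairs.

Record assoc_schemoid (C : category) := AssocSchemoid {
  Blk : Type;
  cls : Mor C -> Blk;
  cls_surj : forall sigma : Blk, exists f, cls f = sigma;
  qs_cond : forall sigma tau mu f g, cls f = mu -> cls g = mu ->
      equinum (@pairs C Blk cls sigma tau f) (@pairs C Blk cls sigma tau g);
  endo_cond : forall f g, cls f = cls g -> src f = tgt f -> src g = tgt g;
  To : Obj C -> Obj C;
  Tm : Mor C -> Mor C;
  T_src : forall f, src (Tm f) = To (tgt f);
  T_tgt : forall f, tgt (Tm f) = To (src f);
  T_id : forall x, Tm (idm x) = idm (To x);
  T_comp : forall a b, src a = tgt b -> Tm (comp a b) = comp (Tm b) (Tm a);
  To_inv : forall x, To (To x) = x;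
  Tm_inv : forall f, Tm (Tm f) = f;
  T_block : forall sigma : Blk, exists tau : Blk,
      forall g, cls g = tau <-> exists f, cls f = sigma /\ g = Tm f
}.

Section SchemoidNotions.
Variables (C : category) (A : assoc_schemoid C).

(** p^mu_{sigma tau} = n  (well defined by the quasi-schemoid condition) *)
Definition pconst (mu sigma tau : Blk A) (n : nat) : Prop :=
  forall f, cls A f = mu -> has_card (@pairs C (Blk A) (cls A) sigma tau f) n.

Definition unital : Prop :=
  forall x g, cls A g = cls A (idm x) -> exists y, g = idm y.

Definition semi_thin : Prop :=
  unital /\
  (forall sigma x f g, cls A f = sigma -> cls A g = sigma ->
      src f = x -> src g = x -> f = g) /\
  (forall f : Mor C, exists g, comp g f = idm (src f) /\ comp f g = idm (tgt f)) /\
  (forall f, comp (Tm A f) f = idm (src f) /\ comp f (Tm A f) = idm (tgt f)).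

Definition in_S0 (alpha : Blk A) : Prop := exists x, cls A (idm x) = alpha.

Definition in_SS (alpha beta sigma : Blk A) : Prop :=
  pconst sigma sigma alpha 1 /\ pconst sigma beta sigma 1.
End SchemoidNotions.

(* Main.v *)
Require Import Defs.
From Stdlib Require Import ProofIrrelevance Lia.
Set Implicit Arguments.

Lemma hc1_intro (X:Type) (P:X->Prop) x0 : P x0 -> (forall y, P y -> y = x0) -> has_card P 1.
Proof.
  intros H0 Hu.
  exists (fun _ => exist (fun i : nat => i < 1) 0 (le_n 1)).
  exists (fun _ => exist P x0 H0).
  split.
  - intros [x Hx]. pose proof (Hu x Hx). subst. f_equal. apply proof_irrelevance.
  - intros [i Hi]. assert (i = 0) by lia. subst. f_equal. apply proof_irrelevance.
Qed.

Lemma hc1_elim (X:Type) (P:X->Prop) : has_card P 1 -> exists x, P x /\ forall y, P y -> y = x.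
Proof.
  intros [h [k [e1 e2]]].
  exists (proj1_sig (k (exist _ 0 (le_n 1)))). split.
  - apply (proj2_sig (k _)).
  - intros y Py.
    assert (E: h (exist _ y Py) = exist (fun i => i < 1) 0 (le_n 1)).
    { destruct (h (exist _ y Py)) as [i Hi]. assert (i=0) by lia. subst. f_equal. apply proof_irrelevance. }
    rewrite <- E, e1. reflexivity.
Qed.

Lemma hc0_intro (X:Type) (P:X->Prop) : (forall x, ~ P x) -> has_card P 0.
Proof.
  intros H.
  exists (fun u => match H _ (proj2_sig u) with end).
  exists (fun v => match (PeanoNat.Nat.nlt_0_r _ (proj2_sig v)) with end).
  split; [intros [x Hx]; destruct (H x Hx) | intros [i Hi]; lia].
Qed.

Lemma To_id C (A : assoc_schemoid C) : semi_thin A -> forall x, To A x = x.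
Proof.
  intros [_ [_ [_ Hinv]]] x.
  destruct (Hinv (idm x)) as [_ H1].
  destruct (Hinv (Tm A (idm x))) as [H2 _].
  rewrite Tm_inv in H2. rewrite H1, T_src, tgt_id in H2.
  apply (f_equal (@src C)) in H2. rewrite !src_id in H2. symmetry; exact H2.
Qed.

Lemma move C (A : assoc_schemoid C) : semi_thin A -> forall g x,
  cls A (idm x) = cls A (idm (src g)) -> exists d, cls A d = cls A g /\ src d = x.
Proof.
  intros Hst g x Hx. pose proof Hst as [_ [_ [_ Hinv]]].
  destruct (T_block A (cls A g)) as [r' Hr'].
  destruct (@qs_cond C A r' (cls A g) (cls A (idm (src g))) (idm (src g)) (idm x) eq_refl Hx)
    as [h [k [e1 e2]]].
  assert (Pg : pairs C (cls A) r' (cls A g) (idm (src g)) (Tm A g, g)).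
  { unfold pairs; simpl. split; [apply Hr'; exists g; auto | split; [reflexivity | split]].
    - rewrite T_src, (@To_id C A Hst); auto.
    - apply Hinv. }
  destruct (h (exist _ _ Pg)) as [[a b] [Ha [Hb [Hab Hc]]]]. simpl in *.
  exists b. split; auto. rewrite <- (src_comp _ a b Hab), Hc, src_id. reflexivity.
Qed.

Lemma S0_id C (A:assoc_schemoid C) : semi_thin A -> forall al, in_S0 A al ->
  forall g, cls A g = al -> exists y, g = idm y.
Proof. intros [Hun _] al [x Hx] g Hg. apply (Hun x). congruence. Qed.

Lemma SS_out C (A:assoc_schemoid C) : semi_thin A -> forall al be si, in_S0 A al -> in_S0 A be ->
  in_SS A al be si ->
  forall f, cls A f = si -> cls A (idm (src f)) = al /\ cls A (idm (tgt f)) = be.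
Proof.
  intros Hst al be si Hal Hbe [H1 H2] f Hf. split.
  - destruct (@hc1_elim _ _ (H1 f Hf)) as [[a b] [[Ha [Hb [Hab Hc]]] _]]. simpl in *.
    destruct (@S0_id C A Hst al Hal b Hb) as [y ->].
    rewrite <- Hc, (src_comp _ a _ Hab), src_id. exact Hb.
  - destruct (@hc1_elim _ _ (H2 f Hf)) as [[a b] [[Ha [Hb [Hab Hc]]] _]]. simpl in *.
    destruct (@S0_id C A Hst be Hbe a Ha) as [y ->].
    rewrite <- Hc, (tgt_comp _ _ b Hab), tgt_id. exact Ha.
Qed.

Lemma SS_in C (A:assoc_schemoid C) : semi_thin A -> forall al be si, in_S0 A al -> in_S0 A be ->
  (forall f, cls A f = si -> cls A (idm (src f)) = al /\ cls A (idm (tgt f)) = be) ->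
  in_SS A al be si.
Proof.
  intros Hst al be si Hal Hbe H. split; intros f Hf; destruct (H f Hf) as [E1 E2].
  - apply (@hc1_intro _ _ (f, idm (src f))).
    + unfold pairs; simpl.
      split; [exact Hf|split; [exact E1|split; [rewrite tgt_id; reflexivity| apply comp_id_r]]].
    + intros [a b] [Ha [Hb [Hab Hc]]]; simpl in *.
      destruct (@S0_id C A Hst al Hal b Hb) as [y ->].
      rewrite tgt_id in Hab. subst y. rewrite comp_id_r in Hc. subst f. reflexivity.
  - apply (@hc1_intro _ _ (idm (tgt f), f)).
    + unfold pairs; simpl.
      split; [exact E2|split; [exact Hf|split; [rewrite src_id; reflexivity| apply comp_id_l]]].
    + intros [a b] [Ha [Hb [Hab Hc]]]; simpl in *.
      destruct (@S0_id C A Hst be Hbe a Ha) as [y ->].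
      rewrite src_id in Hab. subst y. rewrite comp_id_l in Hc. subst f. reflexivity.
Qed.

Lemma pair_uniq C (A:assoc_schemoid C) : semi_thin A -> forall s t f f' p q,
  pairs C (cls A) s t f p -> pairs C (cls A) s t f' q -> src f = src f' -> p = q.
Proof.
  intros [_ [Hthin _]] s t f f' [a1 b1] [a2 b2] [Ha1 [Hb1 [H1 E1]]] [Ha2 [Hb2 [H2 E2]]] Hs.
  simpl in *.
  rewrite <- E1, <- E2, (src_comp _ _ _ H1), (src_comp _ _ _ H2) in Hs.
  assert (b1 = b2) by (apply (Hthin t (src b1)); auto). subst b2.
  assert (a1 = a2) by (apply (Hthin s (tgt b1)); auto). subst a2. reflexivity.
Qed.

Lemma transfer C (A:assoc_schemoid C) : forall s t f f' p,
  pairs C (cls A) s t f p -> cls A f' = cls A f -> exists q, pairs C (cls A) s t f' q.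
Proof.
  intros s t f f' p Hp Hf.
  destruct (@qs_cond C A s t (cls A f) f f' eq_refl Hf) as [h _].
  destruct (h (exist _ p Hp)) as [q Hq]. eauto.
Qed.

Theorem lemma4p4 (C : category) (A : assoc_schemoid C) :
  semi_thin A ->
  forall alpha beta gamma : Blk A,
    in_S0 A alpha -> in_S0 A beta -> in_S0 A gamma ->
  forall sigma tau : Blk A,
    in_SS A alpha beta sigma -> in_SS A beta gamma tau ->
  exists mu : Blk A,
    (in_SS A alpha gamma mu /\ pconst A mu tau sigma 1) /\
    (forall mu', in_SS A alpha gamma mu' /\ pconst A mu' tau sigma 1 -> mu' = mu) /\
    (forall mu' : Blk A, mu' <> mu -> pconst A mu' tau sigma 0).
Proof.
  intros Hst al be ga Hal Hbe Hga si ta Hsi Hta.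
  destruct (cls_surj A si) as [h Hh].
  destruct (@SS_out C A Hst al be si Hal Hbe Hsi h Hh) as [Hh1 Hh2].
  destruct (cls_surj A ta) as [g Hg].
  destruct (@SS_out C A Hst be ga ta Hbe Hga Hta g Hg) as [Hg1 Hg2].
  destruct (@move C A Hst g (tgt h)) as [a [Ha Hsa]]. { rewrite Hh2, Hg1. reflexivity. }
  rewrite Hg in Ha.
  assert (P0 : pairs C (cls A) ta si (comp a h) (a, h)).
  { unfold pairs; simpl; auto. }
  assert (Hsrc : src (comp a h) = src h) by (apply src_comp; auto).
  assert (P1 : pconst A (cls A (comp a h)) ta si 1).
  { intros f Hf. destruct (@transfer C A _ _ _ f _ P0 Hf) as [q Hq].
    apply (@hc1_intro _ _ q Hq). intros y Hy.
    exact (@pair_uniq C A Hst _ _ _ _ _ _ Hy Hq eq_refl). }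
  exists (cls A (comp a h)). split; [split|split].
  - apply (@SS_in C A Hst); auto. intros f Hf.
    destruct (@transfer C A _ _ _ f _ P0 Hf) as [[a' b'] [Ha' [Hb' [Hab' Hc']]]].
    simpl in *.
    destruct (@SS_out C A Hst al be si Hal Hbe Hsi b' Hb') as [E1 _].
    destruct (@SS_out C A Hst be ga ta Hbe Hga Hta a' Ha') as [_ E2].
    rewrite <- Hc', (src_comp _ _ _ Hab'), (tgt_comp _ _ _ Hab'). auto.
  - exact P1.
  - intros mu' [Hmu' Pmu'].
    destruct (cls_surj A mu') as [f' Hf'].
    destruct (@SS_out C A Hst al ga mu' Hal Hga Hmu' f' Hf') as [F1 _].
    destruct (@move C A Hst f' (src h)) as [d [Hd Hsd]]. { congruence. }
    rewrite Hf' in Hd.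
    destruct (@hc1_elim _ _ (Pmu' d Hd)) as [p [Hp _]].
    pose proof (@pair_uniq C A Hst _ _ _ _ _ _ Hp P0 ltac:(congruence)) as Ep.
    subst p. destruct Hp as [_ [_ [_ Hc]]]. simpl in Hc. congruence.
  - intros mu' Hne f Hf. apply hc0_intro. intros [a' b'] Hp.
    pose proof Hp as [Ha' [Hb' [Hab' Hc']]]. simpl in *.
    destruct (@SS_out C A Hst al be si Hal Hbe Hsi b' Hb') as [E1 _].
    destruct (@move C A Hst (comp a h) (src b')) as [d [Hd Hsd]]. { congruence. }
    destruct (@hc1_elim _ _ (P1 d Hd)) as [p [Hpd _]].
    assert (Hsf : src f = src b') by (rewrite <- Hc'; apply src_comp; auto).
    pose proof (@pair_uniq C A Hst _ _ _ _ _ _ Hp Hpd ltac:(congruence)) as Ep.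
    subst p. destruct Hpd as [_ [_ [_ Hc]]]. simpl in Hc. apply Hne. congruence.
Qed.
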